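(* Let ${\mathcal{X}}:=(\mathbb{S}^2)^d$ and ${\mathcal{K}}:=(\mathbb{S}^2_+)^d$. Fix $\eta>0$, $\beta\in[0,1)$ and $\lambda_{\max}=\lambda_1\ge\lambda_2\ge\cdots\ge\lambda_d>0$. Define the linear operator ${\mathcal{T}}:{\mathcal{X}}\to{\mathcal{X}}$ blockwise by \[ ({\mathcal{T}}({\bm{W}}))_i={\bm{A}}_i{\bm{W}}_i{\bm{A}}_i^\top+\eta^2\Bigl(\lambda_i^2({\bm{W}}_i)_{11}+\sum_{j=1}^d\lambda_j^2({\bm{W}}_j)_{11}\Bigr){\bm{Q}},\quad i=1,\ldots,d, \] with ${\bm{A}}_i=\begin{bmatrix}1-\eta\lambda_i&-\beta\\ \eta\lambda_i&\beta\end{bmatrix}$, ${\bm{Q}}=\begin{bmatrix}1&-1\\-1&1\end{bmatrix}$, and define $S(\eta,\beta):=\sum_{i=1}^d\frac{\eta\lambda_i}{2(1-\beta)\left(1-\frac{\eta\lambda_i}{1-\beta^2}\right)}$. Then: (a) ${\mathcal{T}}({\mathcal{K}})\subseteq{\mathcal{K}}$; moreover ${\mathcal{T}}$ has an eigenvalue equal to its spectral radius $\rho({\mathcal{T}})$ with an associated eigenvector ${\bm{W}}^\star=({\bm{W}}_1^\star,\ldots,{\bm{W}}_d^\star)\in{\mathcal{K}}\setminus\{{\bm{0}}\}$, and $\rho({\mathcal{T}})\ge\eta^2\sum_{i=1}^d\lambda_i^2>0$ and $\sum_{i=1}^d({\bm{W}}_i^\star)_{11}>0$. (b) $\rho({\mathcal{T}})=1$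 if and only if $\eta\lambda_{\max}<1-\beta^2$ and $S(\eta,\beta)=1$. (c) $\rho({\mathcal{T}})<1$ if and only if $\eta\lambda_{\max}<1-\beta^2$ and $S(\eta,\beta)<1$.
   Context: $\mathbb{S}^2$ denotes the space of real symmetric $2\times2$ matrices and $\mathbb{S}^2_+$ the cone of positive semidefinite ones; $\rho(\cdot)$ denotes spectral radius. *)

(* Defs.v *)
From HB Require Import structures.
From mathcomp Require Import all_boot all_order all_algebra.
From mathcomp Require Import reals complex.
Set Implicit Arguments. Unset Strict Implicit. Unset Printing Implicit Defensive.
Import Order.TTheory GRing.Theory Num.Theory.
Local Open Scope ring_scope.

Section Ops.
Variable F : comRingType.

Definition Amat (eta beta l : F) : 'M[F]_2 :=
  \matrix_(i < 2, j < 2)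
    if i == ord0 then (if j == ord0 then 1 - eta * l else - beta)
    else (if j == ord0 then eta * l else beta).

Definition Qmat : 'M[F]_2 := \matrix_(i < 2, j < 2) if i == j then 1 else -1.

Definition Top (d : nat) (eta beta : F) (lam : 'I_d -> F)
    (W : 'I_d -> 'M[F]_2) : 'I_d -> 'M[F]_2 :=
  fun i => Amat eta beta (lam i) *m W i *m (Amat eta beta (lam i))^T
     + (eta ^+ 2 * (lam i ^+ 2 * W i ord0 ord0
                    + \sum_(j < d) lam j ^+ 2 * W j ord0 ord0)) *: Qmat.

Definition inX (d : nat) (W : 'I_d -> 'M[F]_2) := forall i, (W i)^T = W i.
End Ops.

Section Real.
Variable R : realType.
Local Open Scope complex_scope.

Definition psd2 (M : 'M[R]_2) :=
  M^T = M /\ forall v : 'cV[R]_2, 0 <= (v^T *m M *m v) ord0 ord0.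

Definition inK (d : nat) (W : 'I_d -> 'M[R]_2) := forall i, psd2 (W i).

(* complex eigenvalue of the real operator T on X, i.e. eigenvalue of its
   complexification on (complex symmetric 2x2 matrices)^d *)
Definition eigT (d : nat) (eta beta : R) (lam : 'I_d -> R) (mu : R[i]) :=
  exists W : 'I_d -> 'M[R[i]]_2,
    inX W /\ (exists i, W i != 0) /\
    Top (eta%:C) (beta%:C) (fun j => (lam j)%:C) W = (fun i => mu *: W i).

Definition is_spectral_radius (d : nat) (eta beta : R) (lam : 'I_d -> R)
    (r : R) :=
  (exists mu, eigT eta beta lam mu /\ `|mu| = r%:C) /\
  (forall mu, eigT eta beta lam mu -> `|mu| <= r%:C).

Definition Sfun (d : nat) (eta beta : R) (lam : 'I_d -> R) : R :=
  \sum_(i < d) (eta * lam i) /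
      (2 * (1 - beta) * (1 - eta * lam i / (1 - beta ^+ 2))).
End Real.

(* Main.v *)
Require Import Defs.
From HB Require Import structures.
From mathcomp Require Import all_boot all_order all_algebra.
From mathcomp Require Import reals complex.
From mathcomp Require Import ring lra.
From mathcomp Require Import boolp classical_sets.
Import Order.TTheory GRing.Theory Num.Theory.
Local Open Scope ring_scope.
Set Implicit Arguments. Unset Strict Implicit. Unset Printing Implicit Defensive.

Ltac neq0 := repeat (apply/andP; split); (apply/negbT/gt_eqF || apply/negbT/lt_eqF); lra.

Section Scal.
Variable R : realType.
Implicit Types b t z : R.
Definition qf b t z := z^+2 - (t^+2 - 2*b)*z + b^+2.
Definition psi b t z := z - b^+2/z - t^+2 + 2*t^+2*b/(z+b).

Lemma q_mono b t z1 z2 : 0 <= b -> 0 < z1 -> b <= z1 -> z1 < z2 -> 0 <= qf b t z1 -> qf b t z1 < qf b t z2.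
Proof.
move=> hb hz1 hbz hz12 hq; rewrite /qf in hq *.
have h2 : t^+2 - 2*b <= 2 * z1.
  rewrite leNgt; apply/negP => hlt.
  have : z1^+2 - (t^+2 - 2*b)*z1 + b^+2 < 0 by nra.
  lra.
nra.
Qed.

Lemma psi_mono b t z1 z2 : 0 <= b -> 0 < z1 -> b <= z1 -> z1 < z2 -> 0 <= qf b t z1 -> 0 <= qf b t z2 -> psi b t z1 < psi b t z2.
Proof.
move=> hb hz1 hbz hz12 hq1 hq2; rewrite /qf in hq1 hq2.
set u := z1 * z2. set P := (z1 + b) * (z2 + b).
have hu : b^+2 < u by rewrite /u; nra.
have hP : 0 < P by rewrite /P; nra.
have hP2 : t^+4 * u <= P^+2.
  have e1 : t^+2 * z1 <= (z1+b)^+2 by nra.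
  have e2 : t^+2 * z2 <= (z2+b)^+2 by nra.
  have -> : t^+4 * u = (t^+2*z1) * (t^+2*z2) by rewrite /u; ring.
  have -> : P^+2 = (z1+b)^+2 * (z2+b)^+2 by rewrite /P; ring.
  apply: ler_pM => //; nra.
have key : 2*b*t^+2*u < (u + b^+2) * P.
  have X0 : 0 < (u + b^+2) * P by nra.
  case: (eqVneq (b * t) 0) => hbt.
    have -> : 2*b*t^+2*u = 2*(b*t)*t*u by ring.
    by rewrite hbt mulr0 mul0r mul0r.
  have hu0 : 0 < u.
    by move: (sqr_ge0 b) => ?; lra.
  have Y0 : 0 <= 2*b*t^+2*u.
    by apply: mulr_ge0; [apply: mulr_ge0; [apply: mulr_ge0 => //; lra | exact: sqr_ge0] | exact: ltW].
  have hsq : (2*b*t^+2*u)^+2 < ((u + b^+2) * P)^+2.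
    have hA : 4*b^+2*u < (u+b^+2)^+2 by nra.
    have tn0 : t != 0 by apply: contraNneq hbt => ->; rewrite mulr0.
    have ht2 : 0 < t^+2 by rewrite lt_def sqr_ge0 sqrf_eq0 tn0.
    have ht4 : 0 < t^+4 * u.
      have -> : t^+4 = t^+2 * t^+2 by rewrite -exprD.
      by apply: mulr_gt0; [apply: mulr_gt0|lra].
    have -> : (2*b*t^+2*u)^+2 = (4*b^+2*u) * (t^+4 * u) by ring.
    have -> : ((u + b^+2) * P)^+2 = (u+b^+2)^+2 * P^+2 by ring.
    have h4 : 0 <= 4*b^+2*u by nra.
    apply: (@le_lt_trans _ _ ((4*b^+2*u) * P^+2)); first by apply: ler_wpM2l.
    have hPP : 0 < P^+2 by rewrite exprn_gt0.
    by rewrite ltr_pM2r.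
  nra.
have hz2 : 0 < z2 by lra.
rewrite /psi -subr_gt0.
have -> : z2 - b ^+ 2 / z2 - t ^+ 2 + 2 * t ^+ 2 * b / (z2 + b) - (z1 - b ^+ 2 / z1 - t ^+ 2 + 2 * t ^+ 2 * b / (z1 + b))
  = (z2 - z1) * ((u + b^+2) * P - 2*b*t^+2*u) / (u * P).
  rewrite /u /P; field.
  by apply/and4P; split; apply/negbT/gt_eqF; lra.
apply: divr_gt0; last by nra.
apply: mulr_gt0; lra.
Qed.

Lemma psiE b t z : 0 <= b -> 0 < z -> psi b t z = (z - b) * qf b t z / (z * (z + b)).
Proof.
move=> hb hz; rewrite /psi /qf; field.
by apply/andP; split; apply/negbT/gt_eqF; lra.
Qed.

Lemma psi_le b t z : 0 <= b -> 0 < z -> b <= z -> psi b t z <= z.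
Proof.
move=> hb hz hbz; rewrite psiE // ler_pdivrMr; last by nra.
rewrite /qf -subr_ge0.
have -> : z * (z * (z + b)) - (z - b) * (z ^+ 2 - (t ^+ 2 - 2 * b) * z + b ^+ 2)
  = t^+2 * (z * (z - b)) + b^+2 * z + b^+2 * b by ring.
have h1 : 0 <= t^+2 * (z * (z - b)) by apply: mulr_ge0; [exact: sqr_ge0|nra].
have h2 : 0 <= b^+2 * z by apply: mulr_ge0; [exact: sqr_ge0|lra].
have h3 : 0 <= b^+2 * b by apply: mulr_ge0; [exact: sqr_ge0|lra].
lra.
Qed.

Lemma psi_lb b t z : 0 <= b -> 0 < z -> b <= z -> z - b - t^+2 <= psi b t z.
Proof.
move=> hb hz hbz; rewrite psiE // ler_pdivlMr; last by nra.
rewrite /qf -subr_ge0.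
have -> : (z - b) * (z ^+ 2 - (t ^+ 2 - 2 * b) * z + b ^+ 2) - (z - b - t ^+ 2) * (z * (z + b))
  = b * ((z - b) * (z + b)) + 2 * b * t^+2 * z by ring.
have h1 : 0 <= b * ((z - b) * (z + b)) by apply: mulr_ge0 => //; apply: mulr_ge0; lra.
have h2 : 0 <= 2 * b * t^+2 * z by apply: mulr_ge0; [apply: mulr_ge0; [lra|exact: sqr_ge0]|lra].
lra.
Qed.

Lemma psi1 b p : 0 <= b -> psi b (1 + b - p) 1 - p^+2 = 2 * p * (1 - b^+2 - p) / (1 + b).
Proof.
move=> hb; rewrite /psi; field; neq0.
Qed.

Lemma q1 b p : qf b (1 + b - p) 1 = p * (2 + 2*b - p).
Proof. rewrite /qf; ring. Qed.
End Scal.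

Section Fam.
Variables (R : realType) (d : nat) (eta beta : R) (lam : 'I_d -> R).
Hypotheses (heta : 0 < eta) (hb0 : 0 <= beta) (hb1 : beta < 1) (hlam : forall i, 0 < lam i).
Definition pp i := eta * lam i.
Definition tau i := 1 + beta - pp i.
Definition ee i z := psi beta (tau i) z - pp i ^+ 2.
Definition Phi z := \sum_i pp i ^+ 2 / ee i z.
Definition Reg z := beta < z /\ forall i, 0 <= qf beta (tau i) z /\ 0 < ee i z.

Local Ltac lra' := have ? := hb0; have ? := hb1; have ? := heta; lra.
Local Ltac nra' := have ? := hb0; have ? := hb1; have ? := heta; nra.

Lemma pp_gt0 i : 0 < pp i. Proof. exact: mulr_gt0. Qed.

Lemma ee_mono z1 z2 i : beta < z1 -> 0 <= qf beta (tau i) z1 -> z1 < z2 ->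
  0 < qf beta (tau i) z2 /\ ee i z1 < ee i z2.
Proof.
move=> hz1 hq hz12.
have hq2 := q_mono hb0 (le_lt_trans hb0 hz1) (ltW hz1) hz12 hq.
split; first lra'.
rewrite /ee ltrBlDr subrK.
apply: psi_mono => //; try lra'.

Qed.

Lemma Reg_up z1 z2 : Reg z1 -> z1 <= z2 -> Reg z2.
Proof.
move=> [hz1 hR] h12; case: (eqVneq z1 z2) => [<-|ne]; first by split.
have lt12 : z1 < z2 by rewrite lt_neqAle ne.
split; first lra'.
move=> i; have [hq he] := hR i; have [hq2 he2] := ee_mono hz1 hq lt12.
split; lra'.
Qed.

Lemma Phi_dec z1 z2 : (0 < d)%N -> Reg z1 -> z1 < z2 -> Phi z2 < Phi z1.
Proof.
move=> hd [hz1 hR] h12; rewrite /Phi; apply: ltr_sum.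
  by apply/hasP; exists (Ordinal hd); rewrite ?mem_index_enum.
move=> i _; have [hq he] := hR i; have [_ he2] := ee_mono hz1 hq h12.
have hp := pp_gt0 i.
rewrite ltr_pM2l ?exprn_gt0 //.
rewrite ltf_pV2 //; rewrite ?posrE; lra'.
Qed.

Definition qP t : {poly R} := 'X^2 - (t^+2 - 2*beta)%:P * 'X + (beta^+2)%:P.
Definition DP c i : {poly R} :=
  ('X - beta%:P) * qP (tau i) - (c * pp i ^+ 2)%:P * ('X * ('X + beta%:P)).

Lemma DPE c i z : (DP c i).[z] = (z - beta) * qf beta (tau i) z - c * pp i ^+2 * (z * (z + beta)).
Proof. by rewrite /DP /qP /qf !hornerE. Qed.

Lemma DP_psi c i z : 0 < z -> (DP c i).[z] = z * (z + beta) * (psi beta (tau i) z - c * pp i ^+2).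
Proof.
move=> hz; rewrite DPE psiE //; field.
by apply/andP; split; apply/negbT/gt_eqF; lra'.
Qed.

Lemma start_pt i : exists m, [/\ 0 < m, beta <= m, 0 <= qf beta (tau i) m & (DP 2 i).[m] < 0].
Proof.
have hp := pp_gt0 i.
set t := tau i.
case: (ltP (4 * beta) (t^+2)) => ht.
  set s := t^+2 - 2*beta.
  have hs : 0 <= s^+2 - 4*beta^+2 by rewrite /s; nra'.
  set m := (s + Num.sqrt (s^+2 - 4*beta^+2)) / 2.
  have hsq := sqr_sqrtr hs.
  have hsq0 := sqrtr_ge0 (s^+2 - 4*beta^+2).
  have hm : 2 * beta < s by rewrite /s; lra'.
  have hmb : beta < m by rewrite /m; lra'.
  have hq : qf beta t m = 0.
    rewrite /qf -/s /m; apply/eqP; rewrite -subr_eq0 subr0; apply/eqP.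
    have -> : ((s + Num.sqrt (s ^+ 2 - 4 * beta ^+ 2)) / 2) ^+ 2 - s * ((s + Num.sqrt (s ^+ 2 - 4 * beta ^+ 2)) / 2) + beta ^+ 2
      = (Num.sqrt (s ^+ 2 - 4 * beta ^+ 2) ^+2 - (s^+2 - 4 * beta^+2)) / 4 by field.
    by rewrite hsq subrr mul0r.
  exists m; split; [lra'|lra'|rewrite hq; lra'|].
  rewrite DPE -/t hq mulr0 sub0r oppr_lt0.
  apply: mulr_gt0; first by apply: mulr_gt0; [lra'|exact: exprn_gt0].
  by apply: mulr_gt0; lra'.
case: (ltP 0 beta) => hbp.
  exists beta; split; [lra'|lra'| |].
    rewrite /qf -/t; nra'.
  rewrite DPE -/t subrr mul0r sub0r oppr_lt0.
  apply: mulr_gt0; first by apply: mulr_gt0; [lra'|exact: exprn_gt0].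
  by apply: mulr_gt0; lra'.
have hb : beta = 0 by lra'.
have ht0 : t^+2 = 0 by move: (sqr_ge0 t); lra'.
exists (pp i ^+ 2); split.
- exact: exprn_gt0.
- rewrite hb; exact: sqr_ge0.
- rewrite /qf -/t ht0 hb; move: (sqr_ge0 (pp i ^+ 2)); rewrite expr0n /=; lra'.
- have hP : 0 < pp i ^+ 2 by exact: exprn_gt0.
  have -> : (DP 2 i).[pp i ^+ 2] = - (pp i ^+ 2 * (pp i ^+ 2 * pp i ^+ 2)).
    by rewrite DPE /qf -/t ht0 hb; ring.
  by rewrite oppr_lt0 !mulr_gt0.
Qed.

Lemma a_exists i : exists a, [/\ beta < a, 0 <= qf beta (tau i) a & ee i a = pp i ^+ 2].
Proof.
have [m [hm hbm hqm hHm]] := start_pt i.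
have ht := sqr_ge0 (tau i); have hp := sqr_ge0 (pp i).
set M := m + beta + tau i ^+2 + 2 * pp i ^+ 2.
have hMpos : 0 < M by rewrite /M; lra'.
have hHM : 0 <= (DP 2 i).[M].
  rewrite DP_psi //; apply: mulr_ge0; first by apply: mulr_ge0; lra'.
  have := psi_lb (tau i) hb0 hMpos (_ : beta <= M).
  rewrite /M; move=> h; have {}h := h ltac:(lra'); lra'.
have [x /andP[hmx hxM] /rootP hx] := @poly_ivt R (DP 2 i) m M ltac:(rewrite /M; lra') ltac:(apply/andP; split; lra').
have hmx' : m < x.
  rewrite lt_neqAle hmx andbT; apply/negP => /eqP e; move: hHm; rewrite e hx; lra'.
have hqx := q_mono hb0 hm hbm hmx' hqm.
have hx0 : 0 < x by lra'.
exists x; split; [lra'|lra'|].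
move: hx; rewrite DP_psi // => /eqP; rewrite mulf_eq0 => /orP[|].
  by rewrite mulf_eq0 => /orP[] /eqP h; lra'.
by rewrite subr_eq0 => /eqP h; rewrite /ee h; ring.
Qed.

Definition FP : {poly R} := \prod_j DP 1 j
  - \sum_i ((pp i ^+ 2)%:P * ('X * ('X + beta%:P))) * \prod_(j | j != i) DP 1 j.

Lemma DP1_pos z j : Reg z -> 0 < (DP 1 j).[z].
Proof.
move=> [hz hR]; have [_ he] := hR j; rewrite DP_psi; last by lra'.
rewrite mul1r; apply: mulr_gt0 => //; apply: mulr_gt0; lra'.
Qed.

Lemma FP_eval z : Reg z -> FP.[z] = (\prod_j (DP 1 j).[z]) * (1 - Phi z).
Proof.
move=> hR; have [hz hR'] := hR.
rewrite /FP hornerD hornerN horner_prod horner_sum mulrBr mulr1 /Phi mulr_sumr.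
congr (_ - _); apply: eq_bigr => i _.
have hz0 : 0 < z by lra'.
have [_ he] := hR' i.
rewrite hornerM horner_prod [in RHS](bigD1 i) //= (DP_psi _ _ hz0) !(hornerM, hornerC, hornerX, hornerD).
rewrite mul1r -/(ee i z); field.
by apply/negbT/gt_eqF.
Qed.

Lemma blk_up i z1 z2 : beta < z1 -> 0 <= qf beta (tau i) z1 -> 0 < ee i z1 -> z1 <= z2 ->
  [/\ beta < z2, 0 <= qf beta (tau i) z2 & 0 < ee i z2].
Proof.
move=> hz hq he h12; case: (eqVneq z1 z2) => [<-|ne]; first by [].
have lt12 : z1 < z2 by rewrite lt_neqAle ne.
have [hq2 he2] := ee_mono hz hq lt12; split; lra'.
Qed.

Lemma rho_exists : (0 < d)%N -> exists rho, Reg rho /\ Phi rho = 1.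
Proof.
move=> hd.
have [af haf] := @fin_all_exists _ (fun _ => R) _ a_exists.
have [k _ hk] := @arg_maxP _ R _ (Ordinal hd) xpredT af isT.
set a := af k.
have hRa : Reg a.
  have [hk1 _ _] := haf k; split => // j.
  have [h1 h2 h3] := haf j.
  have h3' : 0 < ee j (af j) by rewrite h3; exact: exprn_gt0 (pp_gt0 j).
  by have [_ q e] := @blk_up j (af j) a h1 h2 h3' (hk j isT).
have hPa : 1 <= Phi a.
  rewrite /Phi (bigD1 k) //=.
  have [_ _ ->] := haf k.
  rewrite divff; last by apply/negbT/gt_eqF/exprn_gt0/pp_gt0.
  rewrite lerDl; apply: sumr_ge0 => j _.
  have [_ he] := hRa.2 j; apply: divr_ge0; [exact: sqr_ge0 | exact: ltW].
set M := a + beta + \sum_j (tau j ^+ 2 + (d.+1)%:R * pp j ^+ 2).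
have hsum0 : forall j, tau j ^+ 2 + (d.+1)%:R * pp j ^+ 2 <= \sum_j (tau j ^+ 2 + (d.+1)%:R * pp j ^+ 2).
  move=> j; rewrite (bigD1 j) //= lerDl; apply: sumr_ge0 => l _.
  apply: addr_ge0; first exact: sqr_ge0.
  by apply: mulr_ge0; [exact: ler0n|exact: sqr_ge0].
have haM : a <= M.
  have := hsum0 (Ordinal hd); have := sqr_ge0 (tau (Ordinal hd)).
  have := sqr_ge0 (pp (Ordinal hd)); have : (0:R) <= (d.+1)%:R by exact: ler0n.
  move=> h1 h2 h3 h4; rewrite /M.
  have : 0 <= (d.+1)%:R * pp (Ordinal hd) ^+ 2 by apply: mulr_ge0.
  lra'.
have hRM := Reg_up hRa haM.
have hPM : Phi M <= 1.
  have hdR : (0:R) < d%:R by rewrite ltr0n.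
  apply: (@le_trans _ _ (\sum_(j < d) (d%:R)^-1)).
    apply: ler_sum => j _.
    have [_ he] := hRM.2 j.
    have hp := pp_gt0 j.
    have hp2 : 0 < pp j ^+ 2 by exact: exprn_gt0.
    rewrite ler_pdivrMr // mulrC -ler_pdivrMr ?invr_gt0 // invrK.
    have hMb : beta <= M by have := hRM.1; lra'.
    have hM0 : 0 < M by have := hRM.1; lra'.
    have := psi_lb (tau j) hb0 hM0 hMb.
    have := hsum0 j. rewrite /ee.
    have : d.+1%:R * pp j ^+ 2 = d%:R * pp j ^+2 + pp j ^+ 2 by rewrite -addn1 natrD; ring.
    rewrite /M; move=> e1 h1 h2.
    have := sqr_ge0 (tau j).
    have := hRa.1; lra'.
  rewrite sumr_const card_ord.
  have -> : (d%:R)^-1 *+ d = (d%:R)^-1 * d%:R :> R by rewrite mulr_natr.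
  rewrite mulVf //; exact/negbT/gt_eqF.
have hPD : forall z, Reg z -> 0 < \prod_j (DP 1 j).[z].
  by move=> z hz; apply: prodr_gt0 => j _; exact: DP1_pos.
have [x /andP[hax hxM] /rootP hx] := @poly_ivt R FP a M haM
  ltac:(apply/andP; split; rewrite FP_eval //; [apply: mulr_ge0_le0; [exact/ltW/hPD|lra'] | apply: mulr_ge0; [exact/ltW/hPD|lra']]).
have hRx := Reg_up hRa hax.
exists x; split => //.
move: hx; rewrite FP_eval // => /eqP; rewrite mulf_eq0 => /orP[/eqP h|].
  by have := hPD x hRx; rewrite h ltxx.
by rewrite subr_eq0 => /eqP <-.
Qed.
End Fam.

Notation o1 := (@Ordinal 2 1 isT).
Lemma ord2P (i : 'I_2) : i = ord0 \/ i = o1.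
Proof. case: i => [[|[|n]] Hi]; [left|right|by []]; exact/val_inj. Qed.

Section Gen.
Variable F : comRingType.
Implicit Types (A : 'M[F]_2).

Lemma sum2 (f : 'I_2 -> F) : \sum_(k < 2) f k = f ord0 + f o1.
Proof. by rewrite !big_ord_recl big_ord0 addr0; congr (_ + f _); apply/val_inj. Qed.

Lemma mul2E m n (A : 'M[F]_(m,2)) (B : 'M[F]_(2,n)) i j : (A *m B) i j = A i ord0 * B ord0 j + A i o1 * B o1 j.
Proof. by rewrite mxE sum2. Qed.

Lemma congE A (W : 'M[F]_2) r c : (A *m W *m A^T) r c =
  (A r ord0 * W ord0 ord0 + A r o1 * W o1 ord0) * A c ord0 + (A r ord0 * W ord0 o1 + A r o1 * W o1 o1) * A c o1.
Proof. by rewrite mul2E !mul2E !mxE. Qed.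

Lemma AmatE (e b l : F) r c : Amat e b l r c =
  if r == ord0 then (if c == ord0 then 1 - e * l else - b) else (if c == ord0 then e * l else b).
Proof. by rewrite mxE. Qed.

Lemma QmatE r c : Qmat F r c = if r == c then 1 else -1.
Proof. by rewrite mxE. Qed.

Lemma addE (M N : 'M[F]_2) r c : (M + N) r c = M r c + N r c. Proof. by rewrite mxE. Qed.
Lemma sclE (k : F) (M : 'M[F]_2) r c : (k *: M) r c = k * M r c. Proof. by rewrite mxE. Qed.

Lemma TopE d (e b : F) (lam : 'I_d -> F) (W : 'I_d -> 'M[F]_2) i r c :
  Top e b lam W i r c = (Amat e b (lam i) *m W i *m (Amat e b (lam i))^T) r c
     + (e ^+ 2 * (lam i ^+ 2 * W i ord0 ord0 + \sum_(j < d) lam j ^+ 2 * W j ord0 ord0)) * Qmat F r c.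
Proof. by rewrite /Top !mxE. Qed.

Definition coef d (e : F) (lam : 'I_d -> F) (W : 'I_d -> 'M[F]_2) i :=
  e ^+ 2 * (lam i ^+ 2 * W i ord0 ord0 + \sum_(j < d) lam j ^+ 2 * W j ord0 ord0).

Lemma TopC d (e b : F) (lam : 'I_d -> F) (W : 'I_d -> 'M[F]_2) i :
  Top e b lam W i = Amat e b (lam i) *m W i *m (Amat e b (lam i))^T + coef e lam W i *: Qmat F.
Proof. by []. Qed.

Lemma TopD d (e b : F) (lam : 'I_d -> F) (U V : 'I_d -> 'M[F]_2) :
  Top e b lam (fun i => U i + V i) = (fun i => Top e b lam U i + Top e b lam V i).
Proof.
apply: funext => i; rewrite !TopC mulmxDr mulmxDl.
have -> : coef e lam (fun i => U i + V i) i = coef e lam U i + coef e lam V i.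
  rewrite /coef addE; under eq_bigr do rewrite addE mulrDr.
  rewrite big_split /=; ring.
by rewrite scalerDl addrACA.
Qed.

Lemma TopZ d (e b : F) (lam : 'I_d -> F) (k : F) (U : 'I_d -> 'M[F]_2) :
  Top e b lam (fun i => k *: U i) = (fun i => k *: Top e b lam U i).
Proof.
apply: funext => i; rewrite !TopC -scalemxAr -scalemxAl.
have -> : coef e lam (fun i => k *: U i) i = k * coef e lam U i.
  rewrite /coef sclE; under eq_bigr do rewrite sclE mulrCA.
  rewrite -mulr_sumr /=; ring.
by rewrite scalerDr scalerA.
Qed.
End Gen.

Section Morph.
Variables (F G : comRingType) (f : {rmorphism F -> G}).
Lemma Amat_map (e b l : F) : map_mx f (Amat e b l) = Amat (f e) (f b) (f l).
Proof.
apply/matrixP => r c; rewrite !mxE.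
by case: (r == ord0); case: (c == ord0); rewrite ?rmorphB ?rmorphN ?rmorph1 ?rmorphM.
Qed.
Lemma Qmat_map : map_mx f (Qmat F) = Qmat G.
Proof. by apply/matrixP => r c; rewrite !mxE; case: (r == c); rewrite ?rmorphN rmorph1. Qed.

Lemma Top_map d (e b : F) (lam : 'I_d -> F) (W : 'I_d -> 'M[F]_2) :
  Top (f e) (f b) (fun j => f (lam j)) (fun i => map_mx f (W i)) = (fun i => map_mx f (Top e b lam W i)).
Proof.
apply: funext => i; rewrite !TopC map_mxD map_mxZ !map_mxM -map_trmx Amat_map Qmat_map.
congr (_ + _ *: _).
rewrite /coef rmorphM rmorphXn rmorphD rmorphM rmorphXn rmorph_sum mxE.
congr (_ * (_ + _)); apply: eq_bigr => j _.
by rewrite rmorphM rmorphXn mxE.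
Qed.
End Morph.

Section PS.
Variable R : realType.
Implicit Types M N A W : 'M[R]_2.

Definition form M a b := M ord0 ord0 * a^+2 + (M ord0 o1 + M o1 ord0) * a * b + M o1 o1 * b^+2.
Definition ps M := M ord0 o1 = M o1 ord0 /\ forall a b, 0 <= form M a b.

Lemma quad_form M (v : 'cV[R]_2) : (v^T *m M *m v) ord0 ord0 = form M (v ord0 ord0) (v o1 ord0).
Proof. rewrite mul2E !mul2E !mxE /form; ring. Qed.

Lemma sym2 M : M^T = M <-> M ord0 o1 = M o1 ord0.
Proof.
split; first by move/matrixP/(_ o1 ord0); rewrite mxE.
move=> h; apply/matrixP => r c; rewrite mxE.
by case: (ord2P r) => ->; case: (ord2P c) => ->.
Qed.

Lemma psd2_ps M : psd2 M <-> ps M.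
Proof.
split.
  case=> hs hv; split; first exact/sym2.
  move=> a b; have := hv (\col_i (if i == ord0 then a else b)); rewrite quad_form !mxE /=.
  done.
case=> hs hf; split; first exact/sym2.
by move=> v; rewrite quad_form.
Qed.

Lemma ps_crit M : M ord0 o1 = M o1 ord0 -> 0 <= M ord0 ord0 -> 0 <= M o1 o1 ->
  M ord0 o1 ^+ 2 <= M ord0 ord0 * M o1 o1 -> ps M.
Proof.
move=> hs h0 h1 hd; split => // a b; rewrite /form -hs.
case: (ltP 0 (M ord0 ord0)) => hp.
  have : 0 <= M ord0 ord0 * (M ord0 ord0 * a ^+ 2 + (M ord0 o1 + M ord0 o1) * a * b + M o1 o1 * b ^+ 2).
    have -> : M ord0 ord0 * (M ord0 ord0 * a ^+ 2 + (M ord0 o1 + M ord0 o1) * a * b + M o1 o1 * b ^+ 2)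
      = (M ord0 ord0 * a + M ord0 o1 * b)^+2 + (M ord0 ord0 * M o1 o1 - M ord0 o1 ^+ 2) * b^+2 by ring.
    apply: addr_ge0; first exact: sqr_ge0.
    by apply: mulr_ge0; [lra|exact: sqr_ge0].
  by rewrite pmulr_rge0.
have e0 : M ord0 ord0 = 0 by lra.
have e1 : M ord0 o1 = 0.
  by move: hd; rewrite e0 mul0r => h; apply/eqP; rewrite -sqrf_eq0 eq_le h sqr_ge0.
rewrite e0 e1; have := sqr_ge0 b; nra.
Qed.

Lemma ps_ent M : ps M -> [/\ 0 <= M ord0 ord0, 0 <= M o1 o1 & M ord0 o1 ^+ 2 <= M ord0 ord0 * M o1 o1].
Proof.
case=> hs hf.
have h0 : 0 <= M ord0 ord0 by have := hf 1 0; rewrite /form; lra.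
have h1 : 0 <= M o1 o1 by have := hf 0 1; rewrite /form; lra.
split => //.
case: (ltP 0 (M ord0 ord0)) => hp.
  have := hf (M ord0 o1) (- M ord0 ord0); rewrite /form -hs.
  have -> : M ord0 ord0 * M ord0 o1 ^+ 2 + (M ord0 o1 + M ord0 o1) * M ord0 o1 * - M ord0 ord0 +
    M o1 o1 * (- M ord0 ord0) ^+ 2 = M ord0 ord0 * (M ord0 ord0 * M o1 o1 - M ord0 o1 ^+ 2) by ring.
  by rewrite pmulr_rge0 // subr_ge0.
have e0 : M ord0 ord0 = 0 by lra.
rewrite e0 mul0r.
case: (eqVneq (M ord0 o1) 0) => [->|hn]; first by rewrite expr0n.
have := hf (- (M o1 o1 + 1) / (2 * M ord0 o1)) 1; rewrite /form -hs e0.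
have -> : 0 * (- (M o1 o1 + 1) / (2 * M ord0 o1)) ^+ 2 +
    (M ord0 o1 + M ord0 o1) * (- (M o1 o1 + 1) / (2 * M ord0 o1)) * 1 + M o1 o1 * 1 ^+ 2 = -1.
  by field.
lra.
Qed.

Lemma formD M N a b : form (M + N) a b = form M a b + form N a b.
Proof. rewrite /form !mxE; ring. Qed.
Lemma formZ k M a b : form (k *: M) a b = k * form M a b.
Proof. rewrite /form !mxE; ring. Qed.

Lemma ps_add M N : ps M -> ps N -> ps (M + N).
Proof.
case=> s1 f1 [s2 f2]; split; first by rewrite !mxE s1 s2.
by move=> a b; rewrite formD addr_ge0.
Qed.

Lemma ps_scale k M : 0 <= k -> ps M -> ps (k *: M).
Proof.
move=> hk [s1 f1]; split; first by rewrite !mxE s1.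
by move=> a b; rewrite formZ mulr_ge0.
Qed.

Lemma ps_Q : ps (Qmat R).
Proof.
apply: ps_crit; rewrite !mxE //=; lra.
Qed.

Lemma ps_cong A W : ps W -> ps (A *m W *m A^T).
Proof.
case=> s f; split.
  rewrite !congE s; ring.
move=> a b.
have -> : form (A *m W *m A^T) a b = form W (A ord0 ord0 * a + A o1 ord0 * b) (A ord0 o1 * a + A o1 o1 * b).
  rewrite /form !congE; ring.
exact: f.
Qed.

Lemma ps_ext M N : (forall r c, M r c = N r c) -> ps M -> ps N.
Proof. by move=> h; have -> : M = N by apply/matrixP. Qed.

Lemma ps_Top d (e b : R) (lam : 'I_d -> R) (W : 'I_d -> 'M[R]_2) :
  (forall i, ps (W i)) -> forall i, ps (Top e b lam W i).
Proof.
move=> hW i; rewrite TopC; apply: ps_add; first exact: ps_cong.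
apply: ps_scale; last exact: ps_Q.
have h0 : forall j, 0 <= W j ord0 ord0 by move=> j; have [] := ps_ent (hW j).
rewrite /coef; apply: mulr_ge0; first exact: sqr_ge0.
apply: addr_ge0; first by apply: mulr_ge0; [exact: sqr_ge0|exact: h0].
by apply: sumr_ge0 => j _; apply: mulr_ge0; [exact: sqr_ge0|exact: h0].
Qed.
End PS.

Section Blk.
Variable R : realType.
Definition mk2 (a b c : R) : 'M[R]_2 :=
  \matrix_(r < 2, s < 2) if r == ord0 then (if s == ord0 then a else b) else (if s == ord0 then b else c).

Definition blkW (beta t x z : R) : 'M[R]_2 :=
  mk2 x (t * x / (z + beta) - x) (x - 2 * (t * x / (z + beta)) + x / z).

Lemma blk_id (e beta l x z : R) : z != 0 -> z + beta != 0 ->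
  let t := 1 + beta - e * l in
  Amat e beta l *m blkW beta t x z *m (Amat e beta l)^T + (x * psi beta t z) *: Qmat R
  = z *: blkW beta t x z.
Proof.
move=> hz hzb t; apply/matrixP => r c.
rewrite addE sclE congE !sclE !mxE /t /psi.
by case: (ord2P r) => ->; case: (ord2P c) => -> /=; field; apply/andP.
Qed.

Lemma blk_ps (beta t x z : R) : 0 <= beta -> 0 < z -> 0 < x -> 0 <= qf beta t z -> ps (blkW beta t x z).
Proof.
move=> hb hz hx hq; rewrite /blkW.
set bb := t * x / (z + beta).
have key : x * (x - 2 * bb + x / z) - (bb - x)^+2 = x^+2 * qf beta t z / (z * (z + beta)^+2).
  rewrite /bb /qf; field; apply/andP; split; apply/negbT/gt_eqF; lra.
have hk : 0 <= x * (x - 2 * bb + x / z) - (bb - x)^+2.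
  rewrite key; apply: divr_ge0; first by apply: mulr_ge0 => //; exact: sqr_ge0.
  by apply: mulr_ge0; [lra| exact: sqr_ge0].
have h11 : 0 <= x - 2 * bb + x / z.
  have := sqr_ge0 (bb - x) => h; have : 0 <= x * (x - 2 * bb + x / z) by lra.
  by rewrite pmulr_rge0.
apply: ps_crit; rewrite !mxE /=; [done|lra|done|lra].
Qed.

Lemma blk_pd (beta t x z : R) : 0 <= beta -> 0 < z -> 0 < x -> 0 < qf beta t z ->
  let M := blkW beta t x z in 0 < M ord0 ord0 /\ M ord0 o1 ^+ 2 < M ord0 ord0 * M o1 o1.
Proof.
move=> hb hz hx hq M; rewrite /M /blkW.
set bb := t * x / (z + beta).
have key : x * (x - 2 * bb + x / z) - (bb - x)^+2 = x^+2 * qf beta t z / (z * (z + beta)^+2).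
  rewrite /bb /qf; field; apply/andP; split; apply/negbT/gt_eqF; lra.
have hk : 0 < x * (x - 2 * bb + x / z) - (bb - x)^+2.
  rewrite key; apply: divr_gt0; first by apply: mulr_gt0 => //; exact: exprn_gt0.
  by apply: mulr_gt0; [lra| apply: exprn_gt0; lra].
rewrite !mxE /=; split => //; lra.
Qed.
End Blk.

Section Eig.
Variables (R : realType) (d : nat) (eta beta : R) (lam : 'I_d -> R).
Hypotheses (heta : 0 < eta) (hb0 : 0 <= beta) (hb1 : beta < 1) (hlam : forall i, 0 < lam i).

Definition xx i z := eta ^+ 2 / ee eta beta lam i z.
Definition Wz z i := blkW beta (tau eta beta lam i) (xx i z) z.

Lemma Top_Wz z : Reg eta beta lam z ->
  Top eta beta lam (Wz z) = fun i => z *: Wz z i - (eta ^+ 2 * (1 - Phi eta beta lam z)) *: Qmat R.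
Proof.
move=> [hz hR]; apply: funext => i; rewrite TopC.
have hz0 : 0 < z by move: (hb0) => ?; lra.
have hsum : \sum_(j < d) lam j ^+ 2 * Wz z j ord0 ord0 = Phi eta beta lam z.
  rewrite /Phi; apply: eq_bigr => j _.
  have [_ he] := hR j.
  rewrite /Wz /blkW mxE /= /xx /pp; field; exact/negbT/gt_eqF.
have [_ hei] := hR i.
have -> : coef eta lam (Wz z) i = xx i z * psi beta (tau eta beta lam i) z + - (eta ^+ 2 * (1 - Phi eta beta lam z)).
  rewrite /coef hsum /Wz /blkW mxE /= /xx.
  move: hei; rewrite /ee /pp => hei.
  field; exact/negbT/gt_eqF.
rewrite scalerDl addrA /Wz blk_id ?scaleNr //.
  apply/negbT/gt_eqF; lra.
apply/negbT/gt_eqF; move: (hb0) => ?; lra.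
Qed.

Lemma Wz_ps z i : Reg eta beta lam z -> ps (Wz z i).
Proof.
move=> [hz hR]; have [hq he] := hR i.
apply: blk_ps => //; first by move: (hb0) => ?; lra.
by apply: divr_gt0 => //; exact: exprn_gt0.
Qed.

Lemma Wz_pd z i : Reg eta beta lam z -> (forall i, 0 < qf beta (tau eta beta lam i) z) ->
  0 < Wz z i ord0 ord0 /\ Wz z i ord0 o1 ^+ 2 < Wz z i ord0 ord0 * Wz z i o1 o1.
Proof.
move=> [hz hR] hq; have [_ he] := hR i.
apply: blk_pd => //; first by move: (hb0) => ?; lra.
by apply: divr_gt0 => //; exact: exprn_gt0.
Qed.

Lemma Wz00 z i : Wz z i ord0 ord0 = xx i z.
Proof. by rewrite /Wz /blkW mxE. Qed.
End Eig.

Local Open Scope classical_set_scope.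

Section Lin.
Variable F : comRingType.
Lemma Top_lin3 d (e b : F) (lam : 'I_d -> F) (a1 a2 a3 : F) (U1 U2 U3 : 'I_d -> 'M[F]_2) :
  Top e b lam (fun i => a1 *: U1 i + a2 *: U2 i + a3 *: U3 i)
  = fun i => a1 *: Top e b lam U1 i + a2 *: Top e b lam U2 i + a3 *: Top e b lam U3 i.
Proof.
rewrite (TopD e b lam (fun i => a1 *: U1 i + a2 *: U2 i) (fun i => a3 *: U3 i)).
rewrite (TopD e b lam (fun i => a1 *: U1 i) (fun i => a2 *: U2 i)).
by rewrite !TopZ.
Qed.
End Lin.

Section OU.
Variable R : realType.

Lemma eps_le (a b : R) : (forall e, 0 < e -> a <= e * b) -> 0 <= b -> a <= 0.
Proof.
move=> h hb; rewrite leNgt; apply/negP => ha.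
case: (eqVneq b 0) => [hb0|hbn].
  by have := h 1 ltr01; rewrite hb0 mulr0; lra.
have hbp : 0 < b by rewrite lt_neqAle eq_sym hbn.
have h2b : 0 < 2 * b by lra.
have := h (a / (2 * b)) (divr_gt0 ha h2b).
have -> : a / (2 * b) * b = a / 2 by field; apply/negbT/gt_eqF.
lra.
Qed.

Lemma eps_le2 (a b : R) : (forall e, 0 < e -> a <= e * (e * b)) -> 0 <= b -> a <= 0.
Proof.
move=> h hb; apply: (@eps_le a b) => [e' he'|//].
set e := e' / (1 + e').
have he : 0 < e by apply: divr_gt0; lra.
have he1 : e <= e'.
  rewrite /e ler_pdivrMr; last by lra.
  nra.
have he2 : e <= 1 by rewrite /e ler_pdivrMr; lra.
apply: (le_trans (h e he)).
have : e * b <= e' * b by nra.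
have : 0 <= e * b * (1 - e) by apply: mulr_ge0; [exact: mulr_ge0 (ltW he) hb | lra].
nra.
Qed.

Lemma small_zero (E M : 'M[R]_2) :
  0 <= E ord0 ord0 -> 0 <= E o1 o1 -> E ord0 o1 ^+ 2 <= E ord0 ord0 * E o1 o1 ->
  M ord0 o1 = M o1 ord0 ->
  (forall eps, 0 < eps -> ps (eps *: E + M) /\ ps (eps *: E + (-1) *: M)) -> M = 0.
Proof.
move=> hE0 hE1 hEd hs h.
have H : forall e, 0 < e -> 0 <= e * E ord0 ord0 + M ord0 ord0 /\ 0 <= e * E ord0 ord0 - M ord0 ord0 /\
    0 <= e * E o1 o1 + M o1 o1 /\ 0 <= e * E o1 o1 - M o1 o1 /\
    (e * E ord0 o1 + M ord0 o1)^+2 <= (e * E ord0 ord0 + M ord0 ord0) * (e * E o1 o1 + M o1 o1) /\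
    (e * E ord0 o1 - M ord0 o1)^+2 <= (e * E ord0 ord0 - M ord0 ord0) * (e * E o1 o1 - M o1 o1).
  move=> e he; have [h1 h2] := h e he.
  have [a1 a2 a3] := ps_ent h1; have [b1 b2 b3] := ps_ent h2.
  move: a1 a2 a3 b1 b2 b3; rewrite !mxE /= !mulN1r => *; do !split => //.
have h00 : M ord0 ord0 = 0.
  have a1 : M ord0 ord0 <= 0.
    apply: (@eps_le (M ord0 ord0) (E ord0 ord0)) => [e he|//].
    by have [_ [? _]] := H e he; lra.
  have a2 : - M ord0 ord0 <= 0.
    apply: (@eps_le (- M ord0 ord0) (E ord0 ord0)) => [e he|//].
    by have [? _] := H e he; lra.
  lra.
have h11 : M o1 o1 = 0.
  have a1 : M o1 o1 <= 0.
    apply: (@eps_le (M o1 o1) (E o1 o1)) => [e he|//].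
    by have [_ [_ [_ [? _]]]] := H e he; lra.
  have a2 : - M o1 o1 <= 0.
    apply: (@eps_le (- M o1 o1) (E o1 o1)) => [e he|//].
    by have [_ [_ [? _]]] := H e he; lra.
  lra.
have h01 : M ord0 o1 = 0.
  have a1 : M ord0 o1 ^+ 2 <= 0.
    apply: (@eps_le2 (M ord0 o1 ^+ 2) (E ord0 ord0 * E o1 o1 - E ord0 o1 ^+ 2)) => [e he|]; last by lra.
    have [_ [_ [_ [_ [p1 p2]]]]] := H e he; move: p1 p2; rewrite h00 h11 !addr0 !subr0 => p1 p2.
    nra.
  by apply/eqP; rewrite -sqrf_eq0 eq_le a1 sqr_ge0.
apply/matrixP => r c; rewrite mxE.
by case: (ord2P r) => ->; case: (ord2P c) => ->; rewrite ?h00 ?h11 ?h01 // -hs h01.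
Qed.

Lemma pd_dom (E M : 'M[R]_2) (B t : R) :
  E ord0 o1 = E o1 ord0 -> 0 < E ord0 ord0 -> E ord0 o1 ^+ 2 < E ord0 ord0 * E o1 o1 ->
  M ord0 o1 = M o1 ord0 ->
  -B <= M ord0 ord0 <= B -> -B <= M ord0 o1 <= B -> -B <= M o1 o1 <= B ->
  2 * B * (E ord0 ord0 + E o1 o1) / (E ord0 ord0 * E o1 o1 - E ord0 o1 ^+ 2) <= t ->
  ps (t *: E + M).
Proof.
move=> sE hE0 hED sM /andP[b1 b2] /andP[b3 b4] /andP[b5 b6] ht.
have hE1 : 0 < E o1 o1.
  have := sqr_ge0 (E ord0 o1); move=> h; have : 0 < E ord0 ord0 * E o1 o1 by lra.
  by rewrite pmulr_rgt0.
have hB : 0 <= B by lra.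
set D := E ord0 ord0 * E o1 o1 - E ord0 o1 ^+ 2.
set S := E ord0 ord0 + E o1 o1.
have hD : 0 < D by rewrite /D; lra.
have hS : 0 < S by rewrite /S; lra.
have hEps : ps E by apply: ps_crit => //; lra.
split; first by rewrite !mxE sE sM.
move=> a b.
rewrite formD formZ.
have hfE := hEps.2 a b.
have hM : - (2 * B * (a^+2 + b^+2)) <= form M a b.
  rewrite /form -sM.
  have q1 : 0 <= (B + M ord0 ord0) * a^+2 by apply: mulr_ge0; [lra|exact: sqr_ge0].
  have q2 : 0 <= (B + M o1 o1) * b^+2 by apply: mulr_ge0; [lra|exact: sqr_ge0].
  have q3 : 0 <= (B - M ord0 o1) * (a - b)^+2 by apply: mulr_ge0; [lra|exact: sqr_ge0].
  have q4 : 0 <= (B + M ord0 o1) * (a + b)^+2 by apply: mulr_ge0; [lra|exact: sqr_ge0].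
  nra.
have hES : D * (a^+2 + b^+2) <= S * form E a b.
  rewrite /D /S /form -sE -subr_ge0.
  have -> : (E ord0 ord0 + E o1 o1) * (E ord0 ord0 * a ^+ 2 + (E ord0 o1 + E ord0 o1) * a * b + E o1 o1 * b ^+ 2) -
    (E ord0 ord0 * E o1 o1 - E ord0 o1 ^+ 2) * (a ^+ 2 + b ^+ 2)
    = (E ord0 ord0 * a + E ord0 o1 * b)^+2 + (E ord0 o1 * a + E o1 o1 * b)^+2 by ring.
  by apply: addr_ge0; exact: sqr_ge0.
have h1 : 2 * B * S / D * form E a b <= t * form E a b by apply: ler_wpM2r.
have h2 : 2 * B * (a^+2 + b^+2) <= 2 * B * S / D * form E a b.
  have -> : 2 * B * S / D * form E a b = (2 * B / D) * (S * form E a b) by field; apply/negbT/gt_eqF.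
  have -> : 2 * B * (a^+2 + b^+2) = (2 * B / D) * (D * (a^+2 + b^+2)) by field; apply/negbT/gt_eqF.
  by apply: ler_wpM2l => //; apply: divr_ge0 => //; lra.
lra.
Qed.

Lemma entry_bound (c s x y B : R) : c^+2 + s^+2 = 1 -> x^+2 + y^+2 + 1 <= B ->
  -B <= -c * x + s * y <= B.
Proof.
move=> hcs hB.
have h : (-c * x + s * y)^+2 <= x^+2 + y^+2.
  have -> : x^+2 + y^+2 = (c^+2 + s^+2) * (x^+2 + y^+2) by rewrite hcs mul1r.
  rewrite -subr_ge0.
  have -> : (c ^+ 2 + s ^+ 2) * (x ^+ 2 + y ^+ 2) - (- c * x + s * y) ^+ 2 = (c * y + s * x)^+2 by ring.
  exact: sqr_ge0.
set v := -c * x + s * y in h *.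
have h1 : 0 <= v^+2 - 2 * v + 1.
  have -> : v^+2 - 2 * v + 1 = (v - 1)^+2 by ring.
  exact: sqr_ge0.
have h2 : 0 <= v^+2 + 2 * v + 1.
  have -> : v^+2 + 2 * v + 1 = (v + 1)^+2 by ring.
  exact: sqr_ge0.
have h3 := sqr_ge0 x; have h4 := sqr_ge0 y.
apply/andP; split; lra.
Qed.

Lemma ou_bound d (e b : R) (lam : 'I_d -> R) (X Y E : 'I_d -> 'M[R]_2) (m1 m2 z : R) :
  0 < z ->
  (forall i, X i ord0 o1 = X i o1 ord0) -> (forall i, Y i ord0 o1 = Y i o1 ord0) ->
  (forall i r c, Top e b lam X i r c = m1 * X i r c - m2 * Y i r c) ->
  (forall i r c, Top e b lam Y i r c = m2 * X i r c + m1 * Y i r c) ->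
  (forall i, E i ord0 o1 = E i o1 ord0 /\ 0 < E i ord0 ord0 /\ E i ord0 o1 ^+2 < E i ord0 ord0 * E i o1 o1) ->
  (forall i, ps (z *: E i - Top e b lam E i)) ->
  (exists i, X i != 0 \/ Y i != 0) ->
  m1 ^+ 2 + m2 ^+ 2 <= z ^+ 2.
Proof.
move=> hz hXs hYs hTX hTY hE hTE [i0 hne].
set r := Num.sqrt (m1^+2 + m2^+2).
have hr0 : 0 <= r := sqrtr_ge0 _.
have hr2 : r^+2 = m1^+2 + m2^+2 by rewrite sqr_sqrtr // addr_ge0 // sqr_ge0.
case: (leP r z) => hrz; first by rewrite -hr2; nra.
have hrp : 0 < r by lra.
have hEps : forall i, ps (E i).
  move=> i; have [s1 [h0 hd]] := hE i.
  have hE1 : 0 < E i o1 o1.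
    have := sqr_ge0 (E i ord0 o1); move=> h; have : 0 < E i ord0 ord0 * E i o1 o1 by lra.
    by rewrite pmulr_rgt0.
  by apply: ps_crit => //; lra.
pose St := [set t : R | 0 <= t /\ forall c s, c^+2 + s^+2 = 1 ->
   forall i, ps (t *: E i + (- c) *: X i + s *: Y i)].
pose Bf i := X i ord0 ord0 ^+2 + X i ord0 o1 ^+ 2 + X i o1 o1 ^+ 2 +
    Y i ord0 ord0 ^+2 + Y i ord0 o1 ^+ 2 + Y i o1 o1 ^+ 2 + 1.
pose tf i := 2 * Bf i * (E i ord0 ord0 + E i o1 o1) / (E i ord0 ord0 * E i o1 o1 - E i ord0 o1 ^+ 2).
have htf : forall i, 0 <= tf i.
  move=> i; have [s1 [h0 hd]] := hE i; have [_ h1 _] := ps_ent (hEps i).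
  have hB : 0 <= Bf i.
    rewrite /Bf; do ?apply: addr_ge0; rewrite ?sqr_ge0 //.
  apply: divr_ge0; last by lra.
  by apply: mulr_ge0; [apply: mulr_ge0 => //; lra | lra].
have hne0 : St !=set0.
  exists (\sum_i tf i); split; first by apply: sumr_ge0 => i _; exact: htf.
  move=> c s hcs i.
  rewrite -addrA; have [s1 [h0 hd]] := hE i.
  apply: (pd_dom (B := Bf i)) => //.
  - by rewrite !mxE hXs hYs.
  - rewrite !mxE; apply: entry_bound => //; rewrite /Bf.
    have := sqr_ge0 (X i ord0 o1); have := sqr_ge0 (X i o1 o1); have := sqr_ge0 (Y i ord0 o1);
    have := sqr_ge0 (Y i o1 o1); lra.
  - rewrite !mxE; apply: entry_bound => //; rewrite /Bf.
    have := sqr_ge0 (X i ord0 ord0); have := sqr_ge0 (X i o1 o1); have := sqr_ge0 (Y i ord0 ord0);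
    have := sqr_ge0 (Y i o1 o1); lra.
  - rewrite !mxE; apply: entry_bound => //; rewrite /Bf.
    have := sqr_ge0 (X i ord0 o1); have := sqr_ge0 (X i ord0 ord0); have := sqr_ge0 (Y i ord0 o1);
    have := sqr_ge0 (Y i ord0 ord0); lra.
  - rewrite (bigD1 i) //= -/(tf i) lerDl; apply: sumr_ge0 => j _; exact: htf.
have clos : forall t, St t -> St (t * z / r).
  move=> t [ht Ht]; split; first by apply: divr_ge0 => //; apply: mulr_ge0 => //; lra.
  move=> c' s' hcs i.
  set c := (c' * m1 + s' * m2) / r.
  set s := (s' * m1 - c' * m2) / r.
  have hrn : r != 0 by apply/negbT/gt_eqF.
  have hcs2 : c^+2 + s^+2 = 1.
    have -> : c^+2 + s^+2 = (c'^+2 + s'^+2) * (m1^+2 + m2^+2) / r^+2 by rewrite /c /s; field.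
    by rewrite hcs mul1r -hr2 divff // expf_neq0.
  have k1 : - c * m1 + s * m2 = - c' * r.
    have -> : - c * m1 + s * m2 = - c' * (m1^+2 + m2^+2) / r by rewrite /c /s; field.
    by rewrite -hr2; field.
  have k2 : c * m2 + s * m1 = s' * r.
    have -> : c * m2 + s * m1 = s' * (m1^+2 + m2^+2) / r by rewrite /c /s; field.
    by rewrite -hr2; field.
  have HU := ps_Top e b lam (Ht c s hcs2) i.
  rewrite Top_lin3 in HU.
  have HE := ps_scale ht (hTE i).
  have hri : 0 <= r^-1 by rewrite invr_ge0.
  have Hs := ps_scale hri (ps_add HU HE).
  apply: ps_ext Hs => rr cc.
  move: (hTX i) (hTY i).
  move: (Top e b lam X i) (Top e b lam Y i) (Top e b lam E i) => TX TY TE hX hY.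
  rewrite !mxE hX hY.
  transitivity (r^-1 * (t * z * E i rr cc + (- c * m1 + s * m2) * X i rr cc + (c * m2 + s * m1) * Y i rr cc)).
    by ring.
  by rewrite k1 k2; field.
have hlb : lbound St 0 by move=> t [].
have hinf : has_inf St by split => //; exists 0.
set t0 := inf St.
have ht0 : 0 <= t0 := lb_le_inf hne0 hlb.
have hlb2 : lbound St (t0 * r / z).
  move=> t Ht; have := ge_inf hinf.2 (clos t Ht).
  rewrite -/t0 => h.
  rewrite ler_pdivrMr //.
  have : t0 * r <= t * z / r * r by apply: ler_wpM2r.
  by rewrite divfK //; apply/negbT/gt_eqF.
have := lb_le_inf hne0 hlb2; rewrite -/t0 ler_pdivrMr // => hh.
have t00 : t0 = 0 by nra.
have Hsmall : forall eps, 0 < eps -> St eps.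
  move=> eps heps.
  have [t [htp Ht] htlt] := inf_adherent heps hinf.
  rewrite -/t0 t00 add0r in htlt.
  split; first lra.
  move=> c s hcs i.
  have := ps_add (ps_scale (_ : 0 <= eps - t) (hEps i)) (Ht c s hcs i).
  move=> /(_ ltac:(lra)) H; apply: ps_ext H => rr cc; rewrite !mxE; ring.
have [hX|hY] := hne.
  have : X i0 = 0.
    apply: (small_zero (E := E i0)).
    - by have [_ [h _]] := hE i0; lra.
    - by have [] := ps_ent (hEps i0).
    - by have [] := ps_ent (hEps i0).
    - exact: hXs.
    move=> eps heps; have [_ H] := Hsmall eps heps; split.
      apply: ps_ext (H (-1) 0 ltac:(rewrite expr0n /=; ring) i0) => rr cc; rewrite !mxE; ring.
    apply: ps_ext (H 1 0 ltac:(rewrite expr0n /=; ring) i0) => rr cc; rewrite !mxE; ring.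
  by move/eqP: hX.
have : Y i0 = 0.
  apply: (small_zero (E := E i0)).
  - by have [_ [h _]] := hE i0; lra.
  - by have [] := ps_ent (hEps i0).
  - by have [] := ps_ent (hEps i0).
  - exact: hYs.
  move=> eps heps; have [_ H] := Hsmall eps heps; split.
    apply: ps_ext (H 0 1 ltac:(rewrite expr0n /=; ring) i0) => rr cc; rewrite !mxE; ring.
  apply: ps_ext (H 0 (-1) ltac:(rewrite expr0n /=; ring) i0) => rr cc; rewrite !mxE; ring.
by move/eqP: hY.
Qed.
End OU.

Local Close Scope classical_set_scope.

Local Open Scope complex_scope.

Section Cplx.
Variable R : realType.

Lemma cplx_ab (a b : R) : a%:C + 'i * b%:C = a +i* b.
Proof. by apply/eqP; rewrite eq_complex /= !mul0r !mulr0 !mul1r !subr0 !addr0 !add0r !eqxx. Qed.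

Lemma mat_dec (M : 'M[R[i]]_2) :
  M = map_mx (real_complex R) (map_mx (@complex.Re R) M) + 'i *: map_mx (real_complex R) (map_mx (@complex.Im R) M).
Proof.
apply/matrixP => r c; rewrite !mxE cplx_ab.
by case: (M r c).
Qed.

Lemma eig_real d (eta beta : R) (lam : 'I_d -> R) (W : 'I_d -> 'M[R[i]]_2) (mu : R[i]) :
  Top eta%:C beta%:C (fun j => (lam j)%:C) W = (fun i => mu *: W i) ->
  (forall i r c, Top eta beta lam (fun i => map_mx (@complex.Re R) (W i)) i r c
     = complex.Re mu * complex.Re (W i r c) - complex.Im mu * complex.Im (W i r c)) /\
  (forall i r c, Top eta beta lam (fun i => map_mx (@complex.Im R) (W i)) i r c
     = complex.Im mu * complex.Re (W i r c) + complex.Re mu * complex.Im (W i r c)).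
Proof.
move=> hT.
set X := fun i => map_mx (@complex.Re R) (W i).
set Y := fun i => map_mx (@complex.Im R) (W i).
have hW : W = fun i => map_mx (real_complex R) (X i) + 'i *: map_mx (real_complex R) (Y i).
  by apply: funext => i; rewrite {1}(mat_dec (W i)).
have key : forall i r c, (Top eta beta lam X i r c) +i* (Top eta beta lam Y i r c) = mu * W i r c.
  move=> i r c.
  have := congr1 (fun f : 'I_d -> 'M[R[i]]_2 => f i r c) hT; rewrite /= sclE => <-.
  rewrite {1}hW.
  rewrite (TopD _ _ _ (fun i => map_mx (real_complex R) (X i)) (fun i => 'i *: map_mx (real_complex R) (Y i))).
  rewrite (TopZ _ _ _ 'i (fun i => map_mx (real_complex R) (Y i))).
  rewrite (Top_map (real_complex R) eta beta lam X) (Top_map (real_complex R) eta beta lam Y).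
  by rewrite !mxE cplx_ab.
clear hW; split => i r c; move: (key i r c);
  move: (Top eta beta lam X i r c) (Top eta beta lam Y i r c) => a b;
  move: (W i r c) => w; clear key hT; case: mu => m1 m2; case: w => x y /= [ha hb]; rewrite ?ha ?hb /=; ring.
Qed.
End Cplx.

Local Close Scope complex_scope.

Section Fin.
Variables (R : realType) (d : nat) (eta beta : R) (lam : 'I_d -> R).
Hypotheses (heta : 0 < eta) (hb0 : 0 <= beta) (hb1 : beta < 1) (hlam : forall i, 0 < lam i).

Lemma lowb z : Reg eta beta lam z -> Phi eta beta lam z = 1 -> \sum_i pp eta lam i ^+ 2 <= z.
Proof.
move=> [hz hR] hP.
have hz0 : 0 < z by move: (hb0) => ?; lra.
have : \sum_i pp eta lam i ^+ 2 / z <= Phi eta beta lam z.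
  apply: ler_sum => i _; have [hq he] := hR i.
  have hp : 0 < pp eta lam i ^+ 2 by exact: exprn_gt0 (pp_gt0 heta hlam i).
  have hle : ee eta beta lam i z <= z.
    have := psi_le (tau eta beta lam i) hb0 hz0 (ltW hz); rewrite /ee; lra.
  rewrite ler_pM2l //; rewrite lef_pV2 ?posrE //.
rewrite hP -mulr_suml ler_pdivrMr // mul1r; done.
Qed.

Lemma ee1 i : ee eta beta lam i 1 = 2 * pp eta lam i * (1 - beta ^+ 2 - pp eta lam i) / (1 + beta).
Proof. by rewrite /ee /tau psi1. Qed.

Lemma Reg1 (hd : (0 < d)%N) (hdec : forall i j : 'I_d, (i <= j)%N -> lam j <= lam i) :
  Reg eta beta lam 1 <-> eta * lam (Ordinal hd) < 1 - beta ^+ 2.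
Proof.
move: (hb0) (hb1) (heta) => ? ? ?.
split.
  case=> _ /(_ (Ordinal hd)) [_]; rewrite ee1.
  have hp := pp_gt0 heta hlam (Ordinal hd).
  rewrite /pp => h.
  have : 0 < 2 * (eta * lam (Ordinal hd)) * (1 - beta ^+ 2 - eta * lam (Ordinal hd)).
    by move: h; rewrite pmulr_lgt0 // invr_gt0; lra.
  rewrite pmulr_rgt0; first lra.
  by rewrite /pp in hp; lra.
move=> hmax; split => // i.
have hpi : pp eta lam i <= eta * lam (Ordinal hd).
  by rewrite /pp ler_pM2l //; apply: hdec.
have hp := pp_gt0 heta hlam i.
have hb2 : beta ^+ 2 <= beta by rewrite expr2; nra.
have hb3 := sqr_ge0 beta.
split.
  rewrite /tau q1; apply: mulr_ge0; lra.
rewrite ee1; apply: divr_gt0; last lra.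
apply: mulr_gt0; lra.
Qed.

Lemma Phi1 : Reg eta beta lam 1 -> Phi eta beta lam 1 = Sfun eta beta lam.
Proof.
move: (hb0) (hb1) (heta) => ? ? ?.
move=> [_ hR]; rewrite /Phi /Sfun; apply: eq_bigr => i _.
have [_ he] := hR i; move: he; rewrite ee1 => he.
have hp := pp_gt0 heta hlam i.
have hq : 0 < 1 - beta ^+ 2 - pp eta lam i.
  move: he; rewrite pmulr_lgt0 ?invr_gt0; last lra.
  by rewrite pmulr_rgt0 //; lra.
rewrite /pp in hp hq *.
have hb2 : beta ^+ 2 < 1 by rewrite expr2; nra.
have hl := hlam i.
field.
by repeat (apply/andP; split); apply/negbT/gt_eqF; lra.
Qed.
End Fin.

Theorem theoremA2 (R : realType) (d : nat) (hd : (0 < d)%N)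
  (eta beta : R) (lam : 'I_d -> R)
  (heta : 0 < eta) (hb0 : 0 <= beta) (hb1 : beta < 1)
  (hlam_pos : forall i, 0 < lam i)
  (hlam_dec : forall i j : 'I_d, (i <= j)%N -> lam j <= lam i) :
  let lam_max := lam (Ordinal hd) in
  let T := Top eta beta lam in
  exists rho : R,
    is_spectral_radius eta beta lam rho /\
    (* (a) *)
    ((forall W, inK W -> inK (T W)) /\
     (exists Ws : 'I_d -> 'M[R]_2,
        inK Ws /\ (exists i, Ws i != 0) /\
        T Ws = (fun i => rho *: Ws i) /\
        eta ^+ 2 * (\sum_(i < d) lam i ^+ 2) <= rho /\
        0 < eta ^+ 2 * (\sum_(i < d) lam i ^+ 2) /\
        0 < \sum_(i < d) Ws i ord0 ord0)) /\
    (* (b) *)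
    (rho = 1 <-> eta * lam_max < 1 - beta ^+ 2 /\ Sfun eta beta lam = 1) /\
    (* (c) *)
    (rho < 1 <-> eta * lam_max < 1 - beta ^+ 2 /\ Sfun eta beta lam < 1).
Proof.
move=> lam_max T.
have [rho [hR hP]] := rho_exists heta hb0 hb1 hlam_pos hd.
have hrho0 : 0 < rho by have := hR.1; lra.
set Ws := Wz eta beta lam rho.
have hTWs : T Ws = (fun i => rho *: Ws i).
  rewrite /T /Ws (Top_Wz hb0 hR) hP subrr mulr0 scale0r.
  by apply: funext => i; rewrite subr0.
have hWps : forall i, ps (Ws i) by move=> i; exact: Wz_ps.
have hW00 : forall i, 0 < Ws i ord0 ord0.
  move=> i; rewrite /Ws Wz00 /xx; apply: divr_gt0; first exact: exprn_gt0.
  by have [_ /(_ i) [_ ]] := hR.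
have hWnz : Ws (Ordinal hd) != 0.
  by apply/eqP => h; have := hW00 (Ordinal hd); rewrite h mxE ltxx.
have hsum : \sum_(i < d) pp eta lam i ^+ 2 = eta ^+ 2 * (\sum_(i < d) lam i ^+ 2).
  by rewrite mulr_sumr; apply: eq_bigr => i _; rewrite /pp exprMn.
exists rho; split; last split; last split.
-
  split.
  + exists (rho%:C)%C; split; last by rewrite ger0_norm // ler0c; lra.
    exists (fun i => map_mx (real_complex R) (Ws i)); split; [|split].
    * move=> i /=; rewrite map_trmx.
      by have [s _] := hWps i; move/sym2: s => ->.
    * by exists (Ordinal hd); rewrite map_mx_eq0.
    * rewrite (Top_map (real_complex R) eta beta lam Ws).
      rewrite -/T hTWs; apply: funext => i; by rewrite map_mxZ.
  + move=> mu [W [hsym [[i0 hi0] hT]]].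
    have [hX hY] := eig_real hT.
    set m1 := complex.Re mu in hX hY; set m2 := complex.Im mu in hX hY.
    have hbound : forall z, rho < z -> m1 ^+ 2 + m2 ^+ 2 <= z ^+ 2.
      move=> z hz; have hRz := Reg_up heta hb0 hb1 hR (ltW hz).
      have hz0 : 0 < z by lra.
      have hq : forall i, 0 < qf beta (tau eta beta lam i) z.
        by move=> i; have [hq _] := hR.2 i; have [] := ee_mono heta hb0 hb1 hR.1 hq hz.
      apply: (@ou_bound R d eta beta lam (fun i => map_mx (@complex.Re R) (W i))
         (fun i => map_mx (@complex.Im R) (W i)) (Wz eta beta lam z)) => //.
      * move=> i; have := hsym i => /matrixP /(_ o1 ord0); rewrite !mxE => ->; done.
      * move=> i; have := hsym i => /matrixP /(_ o1 ord0); rewrite !mxE => ->; done.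
      * by move=> i r c; rewrite hX !mxE.
      * by move=> i r c; rewrite hY !mxE.
      * move=> i; have [h1 h2] := Wz_pd heta hb0 i hRz hq; split; last by split.
        by rewrite /Wz /blkW !mxE.
      * move=> i; rewrite (Top_Wz hb0 hRz).
        have hPz : Phi eta beta lam z < 1 by rewrite -[X in _ < X]hP; exact: (Phi_dec heta hb0 hb1 hlam_pos hd hR hz).
        have hk : 0 <= eta ^+ 2 * (1 - Phi eta beta lam z) by apply: mulr_ge0; [exact: sqr_ge0|lra].
        apply: ps_ext (ps_scale hk (ps_Q R)) => r c; rewrite !mxE; ring.
      * exists i0; apply/orP; rewrite -negb_and; apply: contra hi0 => /andP[/eqP hx /eqP hy].
        by rewrite (mat_dec (W i0)) hx hy !map_mx0 scaler0 addr0.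
    set s := Num.sqrt (m1 ^+ 2 + m2 ^+ 2).
    have hs0 : 0 <= s := sqrtr_ge0 _.
    have hs2 : s ^+ 2 = m1 ^+ 2 + m2 ^+ 2 by rewrite sqr_sqrtr // addr_ge0 // sqr_ge0.
    have hsr : s <= rho.
      rewrite leNgt; apply/negP => hlt.
      have := hbound ((s + rho) / 2) ltac:(lra); rewrite -hs2 => h.
      nra.
    by rewrite normc_def lecR.
-
  split.
    move=> W hW i; apply/psd2_ps; apply: ps_Top => j; apply/psd2_ps; exact: hW.
  exists Ws; split; first by move=> i; apply/psd2_ps.
  split; first by exists (Ordinal hd).
  split; first exact: hTWs.
  split; first by rewrite -hsum; exact: (lowb heta hb0 hlam_pos hR hP).
  split.
    rewrite -hsum (bigD1 (Ordinal hd)) //=; apply: ltr_pwDl.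
      exact: exprn_gt0 (pp_gt0 heta hlam_pos _).
    by apply: sumr_ge0 => i _; exact: sqr_ge0.
  rewrite (bigD1 (Ordinal hd)) //=; apply: ltr_pwDl; first exact: hW00.
  by apply: sumr_ge0 => i _; exact: ltW.
-
  have R1 := Reg1 heta hb0 hb1 hlam_pos hd hlam_dec.
  have P1 := Phi1 heta hb0 hb1 hlam_pos.
  rewrite /lam_max; split.
    move=> e1; have hR1 : Reg eta beta lam 1 by rewrite -e1.
    split; first by apply/R1.
    by rewrite -P1 //; rewrite e1 in hP.
  case=> /R1 hR1 hS.
  case: (ltgtP rho 1) => // h.
    have := Phi_dec heta hb0 hb1 hlam_pos hd hR h; rewrite hP P1 // hS ltxx //.
  have := Phi_dec heta hb0 hb1 hlam_pos hd hR1 h; rewrite hP P1 // hS ltxx //.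
-
  have R1 := Reg1 heta hb0 hb1 hlam_pos hd hlam_dec.
  have P1 := Phi1 heta hb0 hb1 hlam_pos.
  rewrite /lam_max; split.
    move=> h; have hR1 := Reg_up heta hb0 hb1 hR (ltW h).
    split; first by apply/R1.
    by rewrite -P1 // -[X in _ < X]hP; exact: (Phi_dec heta hb0 hb1 hlam_pos hd hR h).
  case=> /R1 hR1 hS.
  case: (ltgtP rho 1) => // h.
    have := Phi_dec heta hb0 hb1 hlam_pos hd hR1 h; rewrite hP P1 //; lra.
  rewrite -P1 // in hS; have e : Phi eta beta lam 1 = 1 by rewrite -{1}h.
  lra.
Qed.
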